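(* Let $H_0,H_1$ be complex Hilbert spaces, $G$ a densely defined closed operator from $H_0$ into $H_1$ and $D$ a densely defined closed operator from $H_1$ into $H_0$ with $-G^*\subset D$. Let $m\in\mathcal L(H_0)$ (not necessarily coercive) and let $a\in\mathcal L(H_1)$ be coercive. Let $\mathring T\in\mathcal L(\mathrm{dom}(\mathring G))$ be defined by $(\mathring Tu,v)_{\mathrm{dom}(\mathring G)}=(aGu,Gv)_{H_1}+(mu,v)_{H_0}$ for all $u,v\in\mathrm{dom}(\mathring G)$, and suppose $\mathrm{ran}(\mathring T)$ is closed in $\mathrm{dom}(\mathring G)$. Then the Dirichlet-to-Neumann graph $\Lambda$ associated with $-DaG+m$ satisfies \[ \mathrm{dom}(\Lambda)=\{u_0\in\mathrm{BD}(G):(Gu_0,\pi_{\mathrm{BD}(D)}a^*Gv)_{\mathrm{BD}(D)}=0\text{ for all }v\in\ker(m^*-Da^*\mathring G)\}. \]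
   Context: $\mathring D=-G^*$, $\mathring G=-D^*$ (so $\mathring G\subset G$). Domains carry graph inner products, e.g. $(u,v)_{\mathrm{dom}(\mathring G)}=(u,v)_{H_0}+(\mathring Gu,\mathring Gv)_{H_1}$. $\mathrm{BD}(G)$ (resp. $\mathrm{BD}(D)$) is the orthogonal complement of $\mathrm{dom}(\mathring G)$ in $\mathrm{dom}(G)$ (resp. of $\mathrm{dom}(\mathring D)$ in $\mathrm{dom}(D)$) with induced inner products; $\pi_{\mathrm{BD}(G)},\pi_{\mathrm{BD}(D)}$ are the orthogonal projections. Coercive: $\mathrm{Re}(ax,x)\ge\mu\|x\|^2$ for some $\mu>0$. The Dirichlet-to-Neumann graph is $\Lambda=\{(\pi_{\mathrm{BD}(G)}u,\pi_{\mathrm{BD}(D)}aGu): u\in\mathrm{dom}(G),\ aGu\in\mathrm{dom}(D),\ mu-DaGu=0\}$ and $\mathrm{dom}(\Lambda)$ is the set of first components. $\ker(m^*-Da^*\mathring G)=\{v\in\mathrm{dom}(\mathring G):a^*\mathring Gv\in\mathrm{dom}(D),\ m^*v=Da^*\mathring Gv\}$. *)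

(* Defs.v *)
From HB Require Import structures.
From mathcomp Require Import all_boot all_order all_algebra.
From mathcomp Require Import reals complex.
Set Implicit Arguments. Unset Strict Implicit. Unset Printing Implicit Defensive.
Import Order.TTheory GRing.Theory Num.Theory.
Local Open Scope ring_scope.

Section Hilbert.
Variable R : realType.
Local Notation C := (R[i]).

Section Space.
Variable V : lmodType C.
Variable ip : V -> V -> C.

Definition hnorm (x : V) : C := sqrtC (ip x x).

Definition cvg_with (N : V -> C) (u : nat -> V) (x : V) : Prop :=
  forall e : C, 0 < e -> exists n0 : nat, forall n, (n0 <= n)%N -> N (u n - x) < e.

Definition cauchy_with (N : V -> C) (u : nat -> V) : Prop :=
  forall e : C, 0 < e -> exists n0 : nat,
    forall n k, (n0 <= n)%N -> (n0 <= k)%N -> N (u n - u k) < e.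

Definition is_hilbert : Prop :=
  [/\ (forall (c : C) (x y z : V), ip (c *: x + y) z = c * ip x z + ip y z),
      (forall x y : V, ip y x = (ip x y)^*),
      (forall x : V, 0 <= ip x x),
      (forall x : V, ip x x = 0 -> x = 0) &
      (forall u : nat -> V, cauchy_with hnorm u -> exists x, cvg_with hnorm u x)].

End Space.

Section Ops.
Variables (V0 V1 : lmodType C) (ip0 : V0 -> V0 -> C) (ip1 : V1 -> V1 -> C).

(* a (possibly unbounded) operator V0 -> V1 is a domain plus an action,
   the action being meaningful only on the domain *)
Definition densely_defined_closed (dom : V0 -> Prop) (A : V0 -> V1) : Prop :=
  [/\ dom 0,
      (forall (c : C) x y, dom x -> dom y -> dom (c *: x + y)),
      (forall (c : C) x y, dom x -> dom y -> A (c *: x + y) = c *: A x + A y),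
      (forall x (e : C), 0 < e -> exists y, dom y /\ hnorm ip0 (x - y) < e) &
      (forall (u : nat -> V0) x y, (forall n, dom (u n)) ->
         cvg_with (hnorm ip0) u x -> cvg_with (hnorm ip1) (fun n => A (u n)) y ->
         dom x /\ A x = y)].

Definition bounded_linear (m : V0 -> V1) : Prop :=
  (forall (c : C) x y, m (c *: x + y) = c *: m x + m y) /\
  exists K : C, 0 <= K /\ forall x, hnorm ip1 (m x) <= K * hnorm ip0 x.

Definition is_adjoint (m : V0 -> V1) (mstar : V1 -> V0) : Prop :=
  forall x y, ip1 (m x) y = ip0 x (mstar y).

Definition graph_ip (A : V0 -> V1) (x y : V0) : C := ip0 x y + ip1 (A x) (A y).
Definition graph_norm (A : V0 -> V1) (x : V0) : C := sqrtC (graph_ip A x x).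

(* domain of the adjoint A^* of (domA, A): the y for which x |-> (A x, y)
   is represented on domA by some z *)
Definition adj_dom (domA : V0 -> Prop) (A : V0 -> V1) (y : V1) : Prop :=
  exists z : V0, forall x, domA x -> ip1 (A x) y = ip0 x z.

Definition graph_orth (domA S : V0 -> Prop) (A : V0 -> V1) (u : V0) : Prop :=
  domA u /\ forall v, S v -> graph_ip A u v = 0.

Definition is_orth_proj (B : V0 -> Prop) (A : V0 -> V1) (w p : V0) : Prop :=
  B p /\ forall q, B q -> graph_ip A (w - p) q = 0.

End Ops.
End Hilbert.

(* Main.v *)
Require Import Defs.
From HB Require Import structures.
From mathcomp Require Import all_boot all_order all_algebra.
From mathcomp Require Import reals complex.
From mathcomp Require Import boolp ring lra.
Import Order.TTheory GRing.Theory Num.Theory.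

Module Aux.
Local Open Scope complex_scope.
Local Open Scope ring_scope.

Section CX.
Variable R : realType.
Definition sq (z : R[i]) : R := complex.Re z ^+ 2 + complex.Im z ^+ 2.
Lemma sq_ge0 z : 0 <= sq z.
Proof. by rewrite /sq addr_ge0 // sqr_ge0. Qed.
Lemma sq_eq0 z : sq z = 0 -> z = 0.
Proof.
case: z => a b; rewrite /sq /= => h.
have ha : a = 0 by apply/eqP; rewrite -sqrf_eq0; apply/eqP; nra.
have hb : b = 0 by apply/eqP; rewrite -sqrf_eq0; apply/eqP; nra.
by rewrite ha hb.
Qed.
Lemma sqD z w : sq (z + w) <= 2 * sq z + 2 * sq w.
Proof. case: z => a b; case: w => c d; rewrite /sq /=. have := sqr_ge0 (a - c); have := sqr_ge0 (b - d). nra. Qed.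
Lemma sqN z : sq (- z) = sq z.
Proof. case: z => a b; rewrite /sq /=. ring. Qed.
Lemma sq_small z : (forall e : R, 0 < e -> sq z < e) -> z = 0.
Proof.
move=> h; apply: sq_eq0; apply/eqP; rewrite eq_le sq_ge0 andbT.
apply/negPn/negP; rewrite -ltNge => hp.
by move: (h _ hp); rewrite ltxx.
Qed.
Lemma ge0_real (z : R[i]) : 0 <= z -> z = (complex.Re z)%:C.
Proof. case: z => a b; rewrite lecE /= => /andP[/eqP -> _]. by []. Qed.
Lemma ReD (z w : R[i]) : complex.Re (z + w) = complex.Re z + complex.Re w.
Proof. by case: z => a b; case: w. Qed.
Lemma ReN (z : R[i]) : complex.Re (- z) = - complex.Re z.
Proof. by case: z. Qed.
Lemma ReJ (z : R[i]) : complex.Re (z^*)%R = complex.Re z.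
Proof. by case: z. Qed.
Lemma conjN (z : R[i]) : (- z)^* = - (z^*).
Proof. by case: z => a b; simpc. Qed.
Lemma conjD (z w : R[i]) : (z + w)^* = z^* + w^*.
Proof. by case: z => a b; case: w => c d; simpc. Qed.
Lemma conj0 : (0 : R[i])^* = 0.
Proof. by simpc. Qed.
Lemma conjK (z : R[i]) : (z^*)^* = z.
Proof. by case: z => a b; simpc. Qed.
Lemma conjM (z w : R[i]) : (z * w)^* = z^* * w^*.
Proof. by case: z => a b; case: w => c d; simpc. Qed.
Lemma conjR (r : R) : (r%:C)^* = r%:C.
Proof. by simpc. Qed.
Lemma conj_eq0 {z w : R[i]} : z + w = 0 -> z^* + w^* = 0.
Proof. by move=> h; rewrite -conjD h conj0. Qed.
Lemma sub_eq_help (x y z w : R[i]) : x - y + (z - w) = 0 -> x + z = y + w.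
Proof. move=> h; apply/eqP; rewrite -subr_eq0 -h; apply/eqP; ring. Qed.
End CX.
Arguments sq {R}.
Arguments sq_ge0 {R}. Arguments sq_eq0 {R}. Arguments sqD {R}. Arguments sqN {R}. Arguments sq_small {R}. Arguments ge0_real {R}. Arguments ReD {R}. Arguments ReN {R}. Arguments ReJ {R}. Arguments conjN {R}. Arguments conjD {R}. Arguments conj0 {R}. Arguments conjK {R}. Arguments conjM {R}. Arguments conjR {R}. Arguments conj_eq0 {R z w}. Arguments sub_eq_help {R x y z w}.
Definition preH (R : realType) (V : lmodType R[i]) (ip : V -> V -> R[i]) : Prop :=
  [/\ (forall (c : R[i]) (x y z : V), ip (c *: x + y) z = c * ip x z + ip y z),
      (forall x y : V, ip y x = (ip x y)^*),
      (forall x : V, 0 <= ip x x) &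
      (forall x : V, ip x x = 0 -> x = 0)].
Arguments preH {R V} ip.

Section PreH.
Variable R : realType.
Variable V : lmodType R[i].
Variable ip : V -> V -> R[i].
Hypothesis H : preH ip.
Let ipL : forall (c : R[i]) x y z, ip (c *: x + y) z = c * ip x z + ip y z.
Proof. by case: H. Qed.
Let ipC : forall x y, ip y x = (ip x y)^*.
Proof. by case: H. Qed.
Let ipP : forall x, 0 <= ip x x.
Proof. by case: H. Qed.
Let ipE : forall x, ip x x = 0 -> x = 0.
Proof. by case: H. Qed.

Lemma ipDl x y z : ip (x + y) z = ip x z + ip y z.
Proof. by rewrite -[x]scale1r ipL mul1r scale1r. Qed.
Lemma ip0l z : ip 0 z = 0.
Proof. have h := ipDl 0 0 z; rewrite addr0 in h. by apply: (@addrI _ (ip 0 z)); rewrite addr0 -h. Qed.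
Lemma ipZl c x z : ip (c *: x) z = c * ip x z.
Proof. by rewrite -[c *: x]addr0 ipL ip0l addr0. Qed.
Lemma ipNl x z : ip (- x) z = - ip x z.
Proof. by rewrite -scaleN1r ipZl mulN1r. Qed.
Lemma ipBl x y z : ip (x - y) z = ip x z - ip y z.
Proof. by rewrite ipDl ipNl. Qed.
Lemma ipDr x y z : ip z (x + y) = ip z x + ip z y.
Proof. by rewrite ipC ipDl rmorphD (ipC x z) (ipC y z). Qed.
Lemma ip0r z : ip z 0 = 0.
Proof. by rewrite ipC ip0l rmorph0. Qed.
Lemma ipZr c x z : ip z (c *: x) = c^* * ip z x.
Proof. by rewrite ipC ipZl rmorphM (ipC x z). Qed.
Lemma ipNr x z : ip z (- x) = - ip z x.
Proof. by rewrite ipC ipNl rmorphN (ipC x z). Qed.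
Lemma ipBr x y z : ip z (x - y) = ip z x - ip z y.
Proof. by rewrite ipDr ipNr. Qed.

Definition nr x := complex.Re (ip x x).
Lemma ipxx x : ip x x = (nr x)%:C.
Proof. exact: ge0_real. Qed.
Lemma nr_ge0 x : 0 <= nr x.
Proof. by rewrite -ler0c -ipxx. Qed.
Lemma nr_eq0 x : nr x = 0 -> x = 0.
Proof. by move=> h; apply: ipE; rewrite ipxx h. Qed.
Lemma nr0 : nr 0 = 0.
Proof. by rewrite /nr ip0l. Qed.
Lemma nrB x y : nr (x - y) = nr x + nr y - 2 * complex.Re (ip x y).
Proof.
rewrite /nr ipBl !ipBr (ipC y x) !ReD !ReN ReJ. ring.
Qed.
Lemma nrD x y : nr (x + y) = nr x + nr y + 2 * complex.Re (ip x y).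
Proof.
rewrite /nr ipDl !ipDr (ipC y x) !ReD ReJ. ring.
Qed.
Lemma nrN x : nr (- x) = nr x.
Proof. by rewrite /nr ipNl ipNr opprK. Qed.
Lemma nrZ c x : nr (c *: x) = sq c * nr x.
Proof.
rewrite /nr ipZl ipZr ipxx; case: c => a b; rewrite /sq; simpc => /=. ring.
Qed.
Lemma nr_quad x y (s : R) :
  nr (x - ((s%:C) * ip x y) *: y) =
  nr x + s^+2 * sq (ip x y) * nr y - 2 * s * sq (ip x y).
Proof.
rewrite nrB nrZ ipZr.
have -> : sq (s%:C * ip x y) = s ^+ 2 * sq (ip x y).
  by case: (ip x y) => a b; rewrite /sq; simpc => /=; ring.
have -> : complex.Re ((s%:C * ip x y)^* * ip x y) = s * sq (ip x y).
  by case: (ip x y) => a b; rewrite /sq; simpc => /=; ring.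
ring.
Qed.
Lemma CS x y : sq (ip x y) <= nr x * nr y.
Proof.
have [hy|hy] := eqVneq (nr y) 0.
  by rewrite (nr_eq0 _ hy) ip0r nr0 mulr0 /sq /= expr0n /=; lra.
have Q0 : 0 < nr y by rewrite lt_def hy nr_ge0.
have := nr_ge0 (x - (((nr y)^-1)%:C * ip x y) *: y); rewrite nr_quad.
have hs : (nr y)^-1 * nr y = 1 by rewrite mulVf.
have := sq_ge0 (ip x y); have := nr_ge0 x.
move: (nr y) Q0 hs => Q Q0 hs; move: (sq (ip x y)) (nr x) => b X hb hX.
have hQ : 0 < Q^-1 by rewrite invr_gt0.
move: (Q^-1) hQ hs => s hs1 hs2 h.
have h2 := mulr_ge0 (ltW Q0) h.
have e : Q * (X + s ^+ 2 * b * Q - 2 * s * b) = X * Q + b * (s * Q) ^+ 2 - 2 * b * (s * Q) by ring.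
rewrite e hs2 in h2. lra.
Qed.
Definition cvr (u : nat -> V) x := forall e : R, 0 < e ->
  exists N, forall n, (N <= n)%N -> nr (u n - x) < e.
Definition cauchyr (u : nat -> V) := forall e : R, 0 < e ->
  exists N, forall n k, (N <= n)%N -> (N <= k)%N -> nr (u n - u k) < e.

Lemma cvr_orth u x c : cvr u x -> (forall n, ip (u n) c = 0) -> ip x c = 0.
Proof.
move=> hu h; apply: sq_small => e e0.
have hQ : 0 < nr c + 1 by have := nr_ge0 c; lra.
have he : 0 < e / (nr c + 1) by rewrite divr_gt0.
have [N HN] := hu _ he.
have -> : ip x c = - ip (u N - x) c by rewrite ipBl h sub0r opprK.
rewrite sqN; apply: (le_lt_trans (CS _ _)).
have h1 := HN N (leqnn N).
have h2 := nr_ge0 c.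
have h3 := nr_ge0 (u N - x).
have h4 : nr (u N - x) * (nr c + 1) < e.
  by rewrite -ltr_pdivlMr.
nra.
Qed.

Definition epsn (n : nat) : R := (n.+1%:R)^-1.
Lemma invn_le {k n : nat} : (k <= n)%N -> epsn n <= epsn k.
Proof. by move=> h; rewrite /epsn lef_pV2 ?posrE ?ltr0Sn // ler_nat ltnS. Qed.

Lemma invn_gt0 (n : nat) : 0 < epsn n.
Proof. by rewrite invr_gt0 ltr0Sn. Qed.

Lemma small_inv {e : R} : 0 < e -> exists k, forall n, (k <= n)%N -> epsn n < e.
Proof.
move=> he; have [k hk] := ltr_add_invr he; exists k => n hn.
rewrite add0r in hk; exact: (le_lt_trans (invn_le hn)).
Qed.

Lemma two_halves (w a b : V) :
  (w - a) + (w - b) = (2 : R[i]) *: (w - (2^-1 : R[i]) *: (a + b)).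
Proof.
rewrite scalerBr scalerA mulfV ?pnatr_eq0 // scale1r scaler_nat mulr2n.
by rewrite opprD addrACA.
Qed.

Theorem proj_thm (M : V -> Prop) : M 0 ->
  (forall c x y, M x -> M y -> M (c *: x + y)) ->
  (forall u, (forall n, M (u n)) -> cauchyr u -> exists x, M x /\ cvr u x) ->
  forall w, exists p, M p /\ forall q, M q -> ip (w - p) q = 0.
Proof.
move=> M0 Mlin Mc w.
have MD x y : M x -> M y -> M (x + y) by move=> hx hy; rewrite -[x]scale1r; apply: Mlin.
have MZ c x : M x -> M (c *: x) by move=> hx; rewrite -[c *: x]addr0; apply: Mlin.
pose E : classical_sets.set R := fun r => exists m, M m /\ r = nr (w - m).
have hE : classical_sets.has_inf E.
  split; first by exists (nr (w - 0)); exists 0.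
  by exists 0 => r [m [_ ->]]; apply: nr_ge0.
pose d := inf E.
have hd m : M m -> d <= nr (w - m).
  by move=> hm; apply: (ge_inf hE.2); exists m.
have hch : forall n, exists m, M m /\ nr (w - m) < d + epsn n.
  move=> n; have [r [m [hm ->]] hr] := inf_adherent (invn_gt0 n) hE.
  by exists m.
have [ms hms] := choice hch.
have cau : cauchyr ms.
  move=> e he.
  have he4 : 0 < e / 4 by rewrite divr_gt0.
  have [k hk] := small_inv he4.
  exists k => n j hn hj.
  have hmid : M ((2^-1 : R[i]) *: (ms n + ms j)) by apply: MZ; apply: MD; [exact: (hms n).1|exact: (hms j).1].
  have h1 := hd _ hmid.
  have hp := nrD (w - ms n) (w - ms j).
  have hm := nrB (w - ms n) (w - ms j).
  have e1 : (w - ms n) - (w - ms j) = - (ms n - ms j).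
    by rewrite opprD opprK addrACA subrr add0r opprB addrC.
  rewrite e1 nrN two_halves nrZ in hm hp.
  have s2 : sq (2 : R[i]) = 4 by rewrite /sq /=; simpc => /=; lra.
  rewrite s2 in hp.
  have := (hms n).2; have := (hms j).2; have := hk n hn; have := hk j hj.
  move: h1 hp; move: (nr (w - 2^-1 *: (ms n + ms j))) => Z h1 hp. move: (complex.Re (ip (w - ms n) (w - ms j))) hm hp => W hm hp. move=> ha hb hc hdd. move: (nr (ms n - ms j)) (nr (w - ms n)) (nr (w - ms j)) hm hp hc hdd => A X Y q1 q2 q3 q4. lra.
have [p [hp hcv]] := Mc ms (fun n => (hms n).1) cau.
exists p; split => // q hq.
have Q0 := nr_ge0 q.
pose s := (nr q + 1)^-1.
have hs0 : 0 < s by rewrite invr_gt0; lra.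
have hsQ : s * (nr q + 1) = 1 by rewrite mulVf //; apply/eqP => /eqP; rewrite paddr_eq0 //; lra.
have hb n : s * sq (ip (w - ms n) q) < epsn n.
  pose c := (s%:C * ip (w - ms n) q).
  have hM : M (c *: q + ms n) by apply: Mlin => //; exact: (hms n).1.
  have h1 := hd _ hM.
  have e1 : w - (c *: q + ms n) = (w - ms n) - c *: q.
    by rewrite opprD addrA addrAC.
  rewrite e1 nr_quad in h1.
  have h2 := (hms n).2.
  have := sq_ge0 (ip (w - ms n) q).
  move: (sq (ip (w - ms n) q)) h1 => b h1 hb0.
  have e2 : s ^+ 2 * b * nr q = s * b * (s * (nr q + 1)) - s ^+ 2 * b by ring.
  rewrite e2 hsQ in h1.
  have := mulr_ge0 (ltW hs0) hb0; have := mulr_ge0 (mulr_ge0 (ltW hs0) (ltW hs0)) hb0.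
  nra.
apply: sq_small => e he.
have he1 : 0 < s * e / 4 by rewrite !mulr_gt0 // invr_gt0.
have [k1 hk1] := small_inv he1.
have he2 : 0 < e / 4 * s by rewrite !mulr_gt0 // invr_gt0.
have [k2 hk2] := hcv _ he2.
pose n := maxn k1 k2.
have hn1 := hk1 n (leq_maxl _ _).
have hn2 := hk2 n (leq_maxr _ _).
have hbn := hb n.
have -> : ip (w - p) q = ip (w - ms n) q + ip (ms n - p) q.
  by rewrite -ipDl addrA subrK.
apply: (le_lt_trans (sqD _ _)).
have hc := CS (ms n - p) q.
have := sq_ge0 (ip (w - ms n) q); have := sq_ge0 (ip (ms n - p) q).
have := nr_ge0 (ms n - p).
move: (sq (ip (w - ms n) q)) (sq (ip (ms n - p) q)) (nr (ms n - p)) hbn hc hn2 => b1 b2 z hbn hc hn2 h3 h4 h5.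
have hsq : s * nr q < 1 by nra.
nra.
Qed.
Lemma pos_real {e : R[i]} : 0 < e -> e = (complex.Re e)%:C /\ 0 < complex.Re e.
Proof. case: e => a b; rewrite ltcE /= => /andP[hb h]; split => //; by move/eqP: hb => ->. Qed.

Lemma hn_lt y (e : R[i]) : 0 < e -> (hnorm ip y < e) = (nr y < complex.Re e ^+ 2).
Proof.
move=> /pos_real [he hr].
rewrite /hnorm -(@ltr_pXn2r _ 2) //; last 2 first.
- by rewrite qualifE /= sqrtC_ge0.
- by rewrite qualifE /= he ler0c ltW.
rewrite sqrtCK ipxx {1}he -rmorphXn /=. by rewrite ltcR.
Qed.

Lemma cvg_iff u x : cvg_with (hnorm ip) u x <-> cvr u x.
Proof.
split.
- move=> h e he.
  have he' : 0 < (Num.sqrt e)%:C by rewrite ltcR sqrtr_gt0.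
  have [N HN] := h _ he'; exists N => n hn.
  by have := HN n hn; rewrite hn_lt //= sqr_sqrtr // ltW.
- move=> h e he.
  have [_ hr] := pos_real he.
  have [N HN] := h (complex.Re e ^+ 2) (exprn_gt0 _ hr); exists N => n hn.
  by rewrite hn_lt // HN.
Qed.

Lemma cauchy_iff u : cauchy_with (hnorm ip) u <-> cauchyr u.
Proof.
split.
- move=> h e he.
  have he' : 0 < (Num.sqrt e)%:C by rewrite ltcR sqrtr_gt0.
  have [N HN] := h _ he'; exists N => n k hn hk.
  by have := HN n k hn hk; rewrite hn_lt //= sqr_sqrtr // ltW.
- move=> h e he.
  have [_ hr] := pos_real he.
  have [N HN] := h (complex.Re e ^+ 2) (exprn_gt0 _ hr); exists N => n k hn hk.
  by rewrite hn_lt // HN.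
Qed.

Definition completer := forall u, cauchyr u -> exists x, cvr u x.
End PreH.

Arguments nr {R V} ip x.
Arguments cvr {R V} ip u x.
Arguments cauchyr {R V} ip u.
Arguments completer {R V} ip.
Arguments epsn {R} n.
Arguments ipDl {R V ip}.
Arguments ip0l {R V ip}.
Arguments ipZl {R V ip}.
Arguments ipNl {R V ip}.
Arguments ipBl {R V ip}.
Arguments ipDr {R V ip}.
Arguments ip0r {R V ip}.
Arguments ipZr {R V ip}.
Arguments ipNr {R V ip}.
Arguments ipBr {R V ip}.
Arguments ipxx {R V ip}.
Arguments nr_ge0 {R V ip}.
Arguments nr_eq0 {R V ip}.
Arguments nr0 {R V ip}.
Arguments nrB {R V ip}.
Arguments nrD {R V ip}.
Arguments nrN {R V ip}.
Arguments nrZ {R V ip}.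
Arguments nr_quad {R V ip}.
Arguments CS {R V ip}.
Arguments cvr_orth {R V ip}.
Arguments proj_thm {R V ip}.
Arguments cvg_iff {R V ip}.
Arguments cauchy_iff {R V ip}.
Arguments hn_lt {R V ip}.

Lemma hilbert_complete (R : realType) (V : lmodType R[i]) (ip : V -> V -> R[i]) :
  is_hilbert ip -> completer ip.
Proof.
case=> h1 h2 h3 h4 h5.
have H : preH ip by split.
move=> u /(cauchy_iff H u) hu.
have [x hx] := h5 u hu; exists x; exact/(cvg_iff H).
Qed.
Section Prod.
Variable R : realType.
Variables (V0 V1 : lmodType R[i]) (ip0 : V0 -> V0 -> R[i]) (ip1 : V1 -> V1 -> R[i]).
Hypothesis H0 : preH ip0.
Hypothesis H1 : preH ip1.
Hypothesis K0 : completer ip0.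
Hypothesis K1 : completer ip1.
Let L0 : forall (c : R[i]) x y z, ip0 (c *: x + y) z = c * ip0 x z + ip0 y z.
Proof. by case: H0. Qed.
Let C0 : forall x y, ip0 y x = (ip0 x y)^*.
Proof. by case: H0. Qed.
Let P0 : forall x, 0 <= ip0 x x.
Proof. by case: H0. Qed.
Let L1 : forall (c : R[i]) x y z, ip1 (c *: x + y) z = c * ip1 x z + ip1 y z.
Proof. by case: H1. Qed.
Let C1 : forall x y, ip1 y x = (ip1 x y)^*.
Proof. by case: H1. Qed.
Let P1 : forall x, 0 <= ip1 x x.
Proof. by case: H1. Qed.

Definition ipP (x y : (V0 * V1)%type) := ip0 x.1 y.1 + ip1 x.2 y.2.

Lemma LP : forall (c : R[i]) x y z, ipP (c *: x + y) z = c * ipP x z + ipP y z.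
Proof. move=> c [x1 x2] [y1 y2] [z1 z2]; rewrite /ipP /= L0 L1. ring. Qed.
Lemma CP : forall x y, ipP y x = (ipP x y)^*.
Proof. move=> [x1 x2] [y1 y2]; rewrite /ipP /= conjD -C0 -C1. by []. Qed.
Lemma PP : forall x, 0 <= ipP x x.
Proof. move=> [x1 x2]; rewrite /ipP /=; exact: addr_ge0. Qed.
Lemma nrP x : nr ipP x = nr ip0 x.1 + nr ip1 x.2.
Proof. by rewrite /nr /ipP ReD. Qed.
Lemma EP : forall x, ipP x x = 0 -> x = 0.
Proof.
move=> [x1 x2] h.
have h0 := nr_ge0 H0 x1; have h1 := nr_ge0 H1 x2.
have : nr ipP (x1, x2) = 0 by rewrite /nr h.
rewrite nrP /= => hs.
have a1 : nr ip0 x1 = 0 by lra.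
have a2 : nr ip1 x2 = 0 by lra.
by rewrite (nr_eq0 H0 _ a1) (nr_eq0 H1 _ a2).
Qed.

Lemma cvrP_fst {u p} : cvr ipP u p -> cvr ip0 (fun n => (u n).1) p.1.
Proof.
move=> h e he; have [N HN] := h e he; exists N => n hn.
have := HN n hn; rewrite nrP /=; have := nr_ge0 H1 ((u n).2 - p.2); lra.
Qed.
Lemma cvrP_snd {u p} : cvr ipP u p -> cvr ip1 (fun n => (u n).2) p.2.
Proof.
move=> h e he; have [N HN] := h e he; exists N => n hn.
have := HN n hn; rewrite nrP /=; have := nr_ge0 H0 ((u n).1 - p.1); lra.
Qed.
Lemma cauchyP_fst {u} : cauchyr ipP u -> cauchyr ip0 (fun n => (u n).1).
Proof.
move=> h e he; have [N HN] := h e he; exists N => n k hn hk.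
have := HN n k hn hk; rewrite nrP /=; have := nr_ge0 H1 ((u n).2 - (u k).2); lra.
Qed.
Lemma cauchyP_snd {u} : cauchyr ipP u -> cauchyr ip1 (fun n => (u n).2).
Proof.
move=> h e he; have [N HN] := h e he; exists N => n k hn hk.
have := HN n k hn hk; rewrite nrP /=; have := nr_ge0 H0 ((u n).1 - (u k).1); lra.
Qed.
Lemma HP : preH ipP.
Proof. split; [exact: LP|exact: CP|exact: PP|exact: EP]. Qed.
Lemma KP : completer ipP.
Proof.
move=> u hu.
have [x hx] := K0 _ (cauchyP_fst hu).
have [y hy] := K1 _ (cauchyP_snd hu).
exists (x, y) => e he.
have he2 : 0 < e / 2 by rewrite divr_gt0.
have [N1 G1] := hx _ he2; have [N2 G2] := hy _ he2.
exists (maxn N1 N2) => n hn.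
rewrite nrP /=.
have := G1 n (leq_trans (leq_maxl _ _) hn); have := G2 n (leq_trans (leq_maxr _ _) hn).
move=> a b; lra.
Qed.

Variables (domA : V0 -> Prop) (A : V0 -> V1).
Hypothesis hA0 : domA 0.
Hypothesis hAlin : forall (c : R[i]) x y, domA x -> domA y -> domA (c *: x + y).
Hypothesis hAL : forall (c : R[i]) x y, domA x -> domA y -> A (c *: x + y) = c *: A x + A y.
Hypothesis hAcl : forall (u : nat -> V0) x y, (forall n, domA (u n)) ->
         cvg_with (hnorm ip0) u x -> cvg_with (hnorm ip1) (fun n => A (u n)) y ->
         domA x /\ A x = y.

Definition graphA (p : (V0 * V1)%type) := domA p.1 /\ p.2 = A p.1.

Lemma A0 : A 0 = 0.
Proof.
have h := hAL 1 0 0 hA0 hA0; rewrite !scale1r addr0 in h.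
by apply: (@addrI _ (A 0)); rewrite -h addr0.
Qed.
Lemma AD x y : domA x -> domA y -> A (x + y) = A x + A y.
Proof. by move=> hx hy; have := hAL 1 x y hx hy; rewrite !scale1r. Qed.
Lemma AZ c x : domA x -> A (c *: x) = c *: A x.
Proof. by move=> hx; have := hAL c x 0 hx hA0; rewrite A0 !addr0. Qed.
Lemma domD' x y : domA x -> domA y -> domA (x + y).
Proof. by move=> hx hy; rewrite -[x + y]/(x + y); have := hAlin 1 x y hx hy; rewrite scale1r. Qed.
Lemma domZ c x : domA x -> domA (c *: x).
Proof. by move=> hx; have := hAlin c x 0 hx hA0; rewrite addr0. Qed.
Lemma domN x : domA x -> domA (- x).
Proof. by move=> hx; rewrite -scaleN1r; apply: domZ. Qed.
Lemma domB x y : domA x -> domA y -> domA (x - y).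
Proof. by move=> hx hy; apply: domD' => //; apply: domN. Qed.
Lemma AN x : domA x -> A (- x) = - A x.
Proof. by move=> hx; rewrite -scaleN1r AZ // scaleN1r. Qed.
Lemma AB x y : domA x -> domA y -> A (x - y) = A x - A y.
Proof. by move=> hx hy; rewrite AD ?AN //; apply: domN. Qed.

Lemma graphA_sub : graphA 0 /\ forall c x y, graphA x -> graphA y -> graphA (c *: x + y).
Proof.
split; first by split => //=; rewrite A0.
move=> c [x1 x2] [y1 y2] [/= h1 ->] [/= h2 ->]; split => /=; first exact: hAlin.
by rewrite hAL.
Qed.

Lemma graphA_complete u : (forall n, graphA (u n)) -> cauchyr ipP u ->
  exists p, graphA p /\ cvr ipP u p.
Proof.
move=> hu hc; have [p hp] := KP _ hc; exists p; split => //.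
have h1 := cvrP_fst hp; have h2 := cvrP_snd hp.
have e : (fun n => (u n).2) = (fun n => A (u n).1).
  by apply: funext => n; rewrite (hu n).2.
rewrite e in h2.
have [] := @hAcl (fun n => (u n).1) p.1 p.2 (fun n => (hu n).1) (proj2 (cvg_iff H0 _ _) h1) (proj2 (cvg_iff H1 _ _) h2).
by split.
Qed.

Lemma biadj x z : (forall y w, (forall x', domA x' -> ip1 (A x') y = ip0 x' w) ->
    ip1 z y = ip0 x w) -> domA x /\ A x = z.
Proof.
move=> H.
have [p [[hp1 hp2] hq]] := proj_thm HP graphA (proj1 graphA_sub) (proj2 graphA_sub)
   graphA_complete (x, z).
set x2 := x - p.1; set z2 := z - p.2.
have hperp x' : domA x' -> ip1 (A x') z2 = ip0 x' (- x2).
  move=> hx'; have := hq (x', A x') (conj hx' erefl); rewrite /ipP /= => h.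
  rewrite C1 (ipNr H0) (C0 x2 x').
  have h' : ip0 x2 x' + ip1 z2 (A x') = 0 := h.
  have -> : ip1 z2 (A x') = - ip0 x2 x' by apply/eqP; rewrite -addr_eq0 addrC h'.
  by rewrite conjN.
have h1 := H _ _ hperp.
have h2 := hperp _ hp1; rewrite -hp2 in h2.
have h3 : ip1 z2 z2 = - ip0 x2 x2.
  by rewrite /z2 (ipBl H1) h1 h2 -(ipBl H0) (ipNr H0).
move: h3; rewrite (ipxx H0) (ipxx H1) => /(congr1 (@complex.Re R)) /=.
move=> h4.
have q0 := nr_ge0 H0 x2; have q1 := nr_ge0 H1 z2.
have a0 : nr ip0 x2 = 0 by lra.
have a1 : nr ip1 z2 = 0 by lra.
have ex := nr_eq0 H0 _ a0; have ez := nr_eq0 H1 _ a1.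
split.
- by move/eqP: ex; rewrite subr_eq0 => /eqP ->.
- by move/eqP: ez; rewrite subr_eq0 => /eqP ->; move/eqP: ex; rewrite subr_eq0 => /eqP ->.
Qed.
End Prod.
Arguments HP {R V0 V1 ip0 ip1}. Arguments KP {R V0 V1 ip0 ip1}. Arguments nrP {R V0 V1 ip0 ip1}. Arguments graphA_complete {R V0 V1 ip0 ip1}.
Arguments ipP {R V0 V1}. Arguments graphA {R V0 V1}.
Lemma linB (R : realType) (V0 V1 : lmodType R[i]) (f : V0 -> V1) :
  (forall (c : R[i]) x y, f (c *: x + y) = c *: f x + f y) ->
  forall x y, f (x - y) = f x - f y.
Proof.
move=> hf x y; have := (@AB R V0 V1 (fun _ : V0 => True) f I).
move=> h. exact: (h (fun _ _ _ _ _ => I) (fun c x y _ _ => hf c x y) x y I I).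
Qed.
Lemma linD (R : realType) (V0 V1 : lmodType R[i]) (f : V0 -> V1) :
  (forall (c : R[i]) x y, f (c *: x + y) = c *: f x + f y) ->
  forall x y, f (x + y) = f x + f y.
Proof.
move=> hf x y; have := (@AD R V0 V1 (fun _ : V0 => True) f).
move=> h. exact: (h (fun c x y _ _ => hf c x y) x y I I).
Qed.

Section Main.
Variable R : realType.
Variables (V0 V1 : lmodType R[i]) (ip0 : V0 -> V0 -> R[i]) (ip1 : V1 -> V1 -> R[i]).
Hypothesis (HH0 : is_hilbert ip0) (HH1 : is_hilbert ip1).
Variables (domG : V0 -> Prop) (G : V0 -> V1) (domD : V1 -> Prop) (D : V1 -> V0).
Hypothesis HG : densely_defined_closed ip0 ip1 domG G.
Hypothesis HD : densely_defined_closed ip1 ip0 domD D.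
Hypothesis HGD : forall (y : V1) (z : V0),
      (forall x, domG x -> ip1 (G x) y = ip0 x z) -> domD y /\ D y = - z.
Variables (m mstar : V0 -> V0).
Hypothesis Hm : bounded_linear ip0 ip0 m.
Hypothesis Hmstar : is_adjoint ip0 ip0 m mstar.
Variables (a astar : V1 -> V1).
Hypothesis Ha : bounded_linear ip1 ip1 a.
Hypothesis Hastar : is_adjoint ip1 ip1 a astar.
Variable T : V0 -> V0.
Hypothesis HTdom : forall u, adj_dom ip1 ip0 domD D u -> adj_dom ip1 ip0 domD D (T u).
Hypothesis HTdef : forall u v, adj_dom ip1 ip0 domD D u -> adj_dom ip1 ip0 domD D v ->
      graph_ip ip0 ip1 G (T u) v = ip1 (a (G u)) (G v) + ip0 (m u) v.
Hypothesis HTran : forall (un : nat -> V0) (y : V0),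
      (forall n, adj_dom ip1 ip0 domD D (un n)) -> adj_dom ip1 ip0 domD D y ->
      cvg_with (graph_norm ip0 ip1 G) (fun n => T (un n)) y ->
      exists u, adj_dom ip1 ip0 domD D u /\ T u = y.

Let H0 : preH ip0. Proof. by case: HH0. Qed.
Let H1 : preH ip1. Proof. by case: HH1. Qed.
Let K0 : completer ip0. Proof. exact: hilbert_complete. Qed.
Let K1 : completer ip1. Proof. exact: hilbert_complete. Qed.
Let C0 : forall x y, ip0 y x = (ip0 x y)^*. Proof. by case: H0. Qed.
Let C1 : forall x y, ip1 y x = (ip1 x y)^*. Proof. by case: H1. Qed.
Let hG0 : domG 0. Proof. by case: HG. Qed.
Let hGlin : forall (c : R[i]) x y, domG x -> domG y -> domG (c *: x + y). Proof. by case: HG. Qed.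
Let hGL : forall (c : R[i]) x y, domG x -> domG y -> G (c *: x + y) = c *: G x + G y. Proof. by case: HG. Qed.
Let hGcl := let: And5 _ _ _ _ h := HG in h.
Let hD0 : domD 0. Proof. by case: HD. Qed.
Let hDlin : forall (c : R[i]) x y, domD x -> domD y -> domD (c *: x + y). Proof. by case: HD. Qed.
Let hDL : forall (c : R[i]) x y, domD x -> domD y -> D (c *: x + y) = c *: D x + D y. Proof. by case: HD. Qed.
Let hDcl := let: And5 _ _ _ _ h := HD in h.
Let mL : forall (c : R[i]) x y, m (c *: x + y) = c *: m x + m y. Proof. by case: Hm. Qed.
Let aL : forall (c : R[i]) x y, a (c *: x + y) = c *: a x + a y. Proof. by case: Ha. Qed.

Local Notation domGo := (adj_dom ip1 ip0 domD D).
Local Notation domDo := (adj_dom ip0 ip1 domG G).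
Local Notation BDG := (graph_orth ip0 ip1 domG domGo G).
Local Notation BDD := (graph_orth ip1 ip0 domD domDo D).

Lemma GoG {y w} : (forall x', domD x' -> ip0 (D x') y = ip1 x' w) -> domG y /\ G y = - w.
Proof.
move=> hy.
apply: (@biadj _ _ _ _ _ H0 H1 K0 K1 domG G hG0 hGlin hGL hGcl) => y' w' hy'.
have [hd hD] := HGD _ _ hy'.
have := hy _ hd; rewrite hD (ipNl H0) => e.
rewrite (ipNl H1) C1 -e conjN opprK.
by rewrite (C0 w' y).
Qed.

Lemma GoG' {v} : domGo v -> domG v /\ forall x', domD x' -> ip0 (D x') v = - ip1 x' (G v).
Proof.
case=> w hw; have [hv hG] := GoG hw; split => // x' hx'.
by rewrite hw // hG (ipNr H1) opprK.
Qed.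
Let HP01 := HP H0 H1.
Let HP10 := HP H1 H0.
Let KP01 := KP H0 H1 K0 K1.
Let KP10 := KP H1 H0 K1 K0.

Definition gl (x : V0) : (V0 * V1)%type := (x, G x).
Definition gD (y : V1) : (V1 * V0)%type := (y, D y).

Lemma G0 : G 0 = 0. Proof. exact: (@A0 _ _ _ domG G hG0 hGL). Qed.
Lemma GB x y : domG x -> domG y -> G (x - y) = G x - G y.
Proof. exact: (@AB _ _ _ domG G hG0 hGlin hGL). Qed.
Lemma GD x y : domG x -> domG y -> G (x + y) = G x + G y.
Proof. exact: (@AD _ _ _ domG G hGL). Qed.
Lemma GN x : domG x -> G (- x) = - G x.
Proof. exact: (@AN _ _ _ domG G hG0 hGL). Qed.
Lemma DB x y : domD x -> domD y -> D (x - y) = D x - D y.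
Proof. exact: (@AB _ _ _ domD D hD0 hDlin hDL). Qed.
Lemma dGB x y : domG x -> domG y -> domG (x - y).
Proof. exact: (@domB _ _ domG hG0 hGlin). Qed.
Lemma dGD x y : domG x -> domG y -> domG (x + y).
Proof. exact: (@domD' _ _ domG hGlin). Qed.
Lemma dGN x : domG x -> domG (- x).
Proof. exact: (@domN _ _ domG hG0 hGlin). Qed.
Lemma dDB x y : domD x -> domD y -> domD (x - y).
Proof. exact: (@domB _ _ domD hD0 hDlin). Qed.
Lemma glB x y : domG x -> domG y -> gl (x - y) = gl x - gl y.
Proof. by move=> hx hy; rewrite /gl GB. Qed.
Lemma gDB x y : domD x -> domD y -> gD (x - y) = gD x - gD y.
Proof. by move=> hx hy; rewrite /gD DB. Qed.
Lemma mB x y : m (x - y) = m x - m y. Proof. exact: linB. Qed.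
Lemma mD x y : m (x + y) = m x + m y. Proof. exact: linD. Qed.
Lemma aB x y : a (x - y) = a x - a y. Proof. exact: linB. Qed.
Lemma aD x y : a (x + y) = a x + a y. Proof. exact: linD. Qed.

Lemma Dfact {x v} : domD x -> domGo v -> ip1 x (G v) + ip0 (D x) v = 0.
Proof. by move=> hx hv; have [_ h] := GoG' hv; rewrite h // addrN. Qed.

Lemma Ddual x z : (forall v, domGo v -> ip1 x (G v) + ip0 z v = 0) -> domD x /\ D x = z.
Proof.
move=> H.
apply: (@biadj _ _ _ _ _ H1 H0 K1 K0 domD D hD0 hDlin hDL hDcl) => y w hy.
have [_ hGy] := GoG hy.
have := H y (ex_intro _ w hy); rewrite hGy (ipNr H1) => e.
by apply/eqP; rewrite -subr_eq0 addrC e.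
Qed.

Lemma BDGD {u0} : BDG u0 -> domD (G u0) /\ D (G u0) = u0.
Proof.
case=> hu h; apply: Ddual => v hv.
by rewrite addrC; apply: h.
Qed.

Lemma BDD_G {u0} : BDG u0 -> BDD (G u0).
Proof.
move=> hu; have [hd hD] := BDGD hu; split => // y [z hz].
have [_ hy] := HGD _ _ hz.
rewrite /graph_ip hD hy (ipNr H0) -hz; last by case: hu.
exact: addrN.
Qed.
Lemma dGo0 : domGo 0.
Proof. by exists 0 => x' _; rewrite (ip0r H0) (ip0r H1). Qed.
Lemma dGolin {c x y} : domGo x -> domGo y -> domGo (c *: x + y).
Proof.
case=> w1 h1 [w2 h2]; exists (c *: w1 + w2) => x' hx'.
by rewrite (ipDr H0) (ipZr H0) h1 // h2 // (ipDr H1) (ipZr H1).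
Qed.
Lemma dGoB x y : domGo x -> domGo y -> domGo (x - y).
Proof. by move=> hx hy; rewrite addrC -scaleN1r; apply: dGolin. Qed.
Lemma dGoN x : domGo x -> domGo (- x).
Proof. by move=> hx; rewrite -[- x]add0r; apply: dGoB => //; exact: dGo0. Qed.
Lemma GoG_dom {v} : domGo v -> domG v.
Proof. by case/GoG'. Qed.

Definition M3 (p : (V0 * V1)%type) := domGo p.1 /\ p.2 = G p.1.
Lemma M3sub : M3 0 /\ forall c x y, M3 x -> M3 y -> M3 (c *: x + y).
Proof.
split; first by split; [exact: dGo0 | rewrite /= G0].
move=> c [x1 x2] [y1 y2] [/= h1 ->] [/= h2 ->]; split => /=; first exact: dGolin.
by rewrite hGL //; apply: GoG_dom.
Qed.
Lemma M3complete u : (forall n, M3 (u n)) -> cauchyr (ipP ip0 ip1) u ->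
  exists p, M3 p /\ cvr (ipP ip0 ip1) u p.
Proof.
move=> hu hc.
have hu' : forall n, graphA domG G (u n).
  by move=> n; split; [exact: (GoG_dom (hu n).1) | exact: (hu n).2].
have [p [[hp1 hp2] hcv]] := graphA_complete H0 H1 K0 K1 domG G hGcl u hu' hc.
exists p; split; last by []. split; last by [].
exists (- p.2) => x' hx'.
have h : ipP ip0 ip1 p (D x', x') = 0.
  apply: (cvr_orth HP01 _ _ _ hcv) => n.
  have [hd hn] := GoG' (hu n).1.
  rewrite /ipP /= (hu n).2 (C0 (D x') ((u n).1)) (C1 x' (G (u n).1)) hn // conjN.
  exact: addNr.
have h' := conj_eq0 h.
rewrite /ipP /= -(C0 p.1 (D x')) -(C1 p.2 x') in h'.
by rewrite (ipNr H1); apply/eqP; rewrite -addr_eq0 h'.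
Qed.

Lemma gl_def {d} : domG d -> graph_ip ip0 ip1 G d d = 0 -> d = 0.
Proof.
move=> hd h; case: HP01 => _ _ _ E.
by have := E (gl d) h => /(congr1 fst).
Qed.

Lemma gipL c x y v : domG x -> domG y ->
  graph_ip ip0 ip1 G (c *: x + y) v = c * graph_ip ip0 ip1 G x v + graph_ip ip0 ip1 G y v.
Proof.
move=> hx hy; rewrite /graph_ip hGL //; case: H0 => L0 _ _ _; case: H1 => L1 _ _ _.
rewrite L0 L1; ring.
Qed.
Lemma gipB x y v : domG x -> domG y ->
  graph_ip ip0 ip1 G (x - y) v = graph_ip ip0 ip1 G x v - graph_ip ip0 ip1 G y v.
Proof.
move=> hx hy; rewrite /graph_ip GB // (ipBl H0) (ipBl H1); ring.
Qed.
Lemma gipC x y : graph_ip ip0 ip1 G y x = (graph_ip ip0 ip1 G x y)^*.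
Proof. by rewrite /graph_ip conjD -C0 -C1. Qed.
Lemma gDipC x y : graph_ip ip1 ip0 D y x = (graph_ip ip1 ip0 D x y)^*.
Proof. by rewrite /graph_ip conjD -C0 -C1. Qed.
Lemma gDipB x y v : domD x -> domD y ->
  graph_ip ip1 ip0 D (x - y) v = graph_ip ip1 ip0 D x v - graph_ip ip1 ip0 D y v.
Proof.
move=> hx hy; rewrite /graph_ip DB // (ipBl H0) (ipBl H1); ring.
Qed.
Lemma M3gl {g} : M3 g -> g = gl g.1.
Proof. by case: g => g1 g2 [_ /= ->]. Qed.

Lemma dir1 u u0 : domG u -> domD (a (G u)) -> m u - D (a (G u)) = 0 ->
  is_orth_proj ip0 ip1 BDG G u u0 ->
  BDG u0 /\ forall v p, [/\ domGo v, domD (astar (G v)) & mstar v = D (astar (G v))] ->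
     is_orth_proj ip1 ip0 BDD D (astar (G v)) p -> graph_ip ip1 ip0 D (G u0) p = 0.
Proof.
move=> hu hau hmu [hu0 hpr]; split => // v p [hv hvD hvm] [hpB hpq].
have hu0G : domG u0 by case: hu0.
have hring : domGo (u - u0).
  have [g [hg hgq]] := proj_thm HP01 M3 M3sub.1 M3sub.2 M3complete (gl (u - u0)).
  have eg := M3gl hg; case: hg => hg1 _.
  rewrite eg in hgq.
  have hg1G := GoG_dom hg1.
  have hd2 : domG (u - u0) by apply: dGB.
  have hb : domG (u - u0 - g.1) by apply: dGB.
  have hbB : BDG (u - u0 - g.1).
    split => // v' hv'.
    have := hgq (gl v') (conj hv' erefl).
    by move=> h; rewrite -glB // in h.
  have h1 := hpr _ hbB.
  have h2 : graph_ip ip0 ip1 G g.1 (u - u0 - g.1) = 0.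
    by rewrite gipC (proj2 hbB _ hg1) conj0.
  have h3 : graph_ip ip0 ip1 G (u - u0 - g.1) (u - u0 - g.1) = 0.
    by rewrite gipB // h1 h2 subrr.
  have := gl_def hb h3 => /eqP; rewrite subr_eq0 => /eqP ->.
  exact: hg1.
have hrG := GoG_dom hring.
have [hd hDu0] := BDGD hu0.
have hBD := BDD_G hu0.
have hp_dom : domD p by case: hpB.
have e1 : graph_ip ip1 ip0 D (G u0) p = graph_ip ip1 ip0 D (G u0) (astar (G v)).
  have h := hpq _ hBD.
  rewrite gDipB // in h.
  rewrite (gDipC p (G u0)) (gDipC (astar (G v)) (G u0)); congr (_^*).
  by apply/eqP; rewrite eq_sym -subr_eq0 h.
rewrite e1 /graph_ip hDu0 -hvm -Hastar -Hmstar.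
have eG : G u0 = G u - G (u - u0).
  by rewrite -GB // opprB addrC subrK.
have em : m u0 = m u - m (u - u0) by rewrite -mB opprB addrC subrK.
rewrite eG em aB (ipBl H1) (ipBl H0).
have f1 : ip1 (a (G u)) (G v) + ip0 (m u) v = 0.
  have := Dfact hau hv; move/eqP: hmu; rewrite subr_eq0 => /eqP <-. by [].
have f2 : ip1 (a (G (u - u0))) (G v) + ip0 (m (u - u0)) v = 0.
  rewrite Hastar Hmstar hvm.
  have := conj_eq0 (Dfact hvD hring).
  by rewrite -C1 -C0.
by rewrite addrACA -opprD f1 f2 oppr0 addr0.
Qed.
Lemma uniq0 {d} : domGo d -> (forall v, domGo v -> graph_ip ip0 ip1 G d v = 0) -> d = 0.
Proof. by move=> hd h; apply: (gl_def (GoG_dom hd) (h d hd)). Qed.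

Lemma gipN x v : domG x -> graph_ip ip0 ip1 G (- x) v = - graph_ip ip0 ip1 G x v.
Proof. by move=> hx; rewrite /graph_ip GN // (ipNl H0) (ipNl H1) opprD. Qed.

Lemma TL c {x y} : domGo x -> domGo y -> T (c *: x + y) = c *: T x + T y.
Proof.
move=> hx hy.
have hxy := @dGolin c x y hx hy.
have hT1 := HTdom _ hxy; have hTx := HTdom _ hx; have hTy := HTdom _ hy.
have hT2 : domGo (c *: T x + T y) by apply: dGolin.
apply/eqP; rewrite -subr_eq0; apply/eqP; apply: uniq0; first exact: dGoB.
move=> v hv.
have g1 := GoG_dom hT1; have g2 := GoG_dom hT2; have gx := GoG_dom hTx; have gy := GoG_dom hTy.
rewrite gipB // gipL // !HTdef //.
have gxx := GoG_dom hx; have gyy := GoG_dom hy.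
rewrite hGL // aL mL.
case: H0 => L0 _ _ _; case: H1 => L1 _ _ _.
rewrite L0 L1; ring.
Qed.

Lemma T0 : T 0 = 0.
Proof.
have h := TL 1 dGo0 dGo0; rewrite !scale1r addr0 in h.
by apply: (@addrI _ (T 0)); rewrite -h addr0.
Qed.

Definition M4 (q : (V0 * V1)%type) := exists u, domGo u /\ q = gl (T u).
Lemma M4sub : M4 0 /\ forall c x y, M4 x -> M4 y -> M4 (c *: x + y).
Proof.
split; first by exists 0; split; [exact: dGo0 | rewrite /gl T0 G0].
move=> c x y [u [hu ->]] [u' [hu' ->]]; exists (c *: u + u'); split; first exact: dGolin.
have g1 := GoG_dom (HTdom _ hu); have g2 := GoG_dom (HTdom _ hu').
by rewrite /gl TL // hGL.
Qed.

Lemma M4complete u : (forall n, M4 (u n)) -> cauchyr (ipP ip0 ip1) u ->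
  exists p, M4 p /\ cvr (ipP ip0 ip1) u p.
Proof.
move=> hu hc.
have [x hx] := choice hu.
have hM3 : forall n, M3 (u n).
  move=> n; case: (hx n) => hxn ->; split => //=; exact: HTdom.
have [g [hg hcv]] := M3complete _ hM3 hc.
exists g; split => //.
have eg := M3gl hg; case: hg => hg1 _.
have hcv' := proj2 (cvg_iff HP01 u g) hcv.
have [ur [hur hTur]] : exists ur, domGo ur /\ T ur = g.1.
  apply: (HTran x) => //; first by move=> n; case: (hx n).
  move=> e he; have [N HN] := hcv' e he; exists N => n hn.
  have := HN n hn; case: (hx n) => hxn ->; rewrite eg -glB //.
  - by apply: GoG_dom; apply: HTdom.
  - exact: GoG_dom.
by exists ur; split => //; rewrite eg hTur.
Qed.

Definition M5 (q : (V1 * V0)%type) := BDD q.1 /\ q.2 = D q.1.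
Lemma D0 : D 0 = 0. Proof. exact: (@A0 _ _ _ domD D hD0 hDL). Qed.
Lemma gDipL c x y v : domD x -> domD y ->
  graph_ip ip1 ip0 D (c *: x + y) v = c * graph_ip ip1 ip0 D x v + graph_ip ip1 ip0 D y v.
Proof.
move=> hx hy; rewrite /graph_ip hDL //; case: H0 => L0 _ _ _; case: H1 => L1 _ _ _.
rewrite L0 L1; ring.
Qed.
Lemma M5sub : M5 0 /\ forall c x y, M5 x -> M5 y -> M5 (c *: x + y).
Proof.
split.
  split => /=; last by rewrite D0.
  split => // y _; by rewrite /graph_ip D0 (ip0l H0) (ip0l H1) addr0.
move=> c [x1 x2] [y1 y2] [[/= h1 h1o] ->] [[/= h2 h2o] ->]; split => /=; last by rewrite hDL.
split; first exact: hDlin.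
by move=> v hv; rewrite gDipL // h1o // h2o // mulr0 addr0.
Qed.
Lemma M5complete u : (forall n, M5 (u n)) -> cauchyr (ipP ip1 ip0) u ->
  exists p, M5 p /\ cvr (ipP ip1 ip0) u p.
Proof.
move=> hu hc.
have hu' : forall n, graphA domD D (u n).
  by move=> n; case: (hu n) => [[h _] e]; split.
have [p [[hp1 hp2] hcv]] := graphA_complete H1 H0 K1 K0 domD D hDcl u hu' hc.
exists p; split => //; split => //; split => // y hy.
have h : ipP ip1 ip0 p (gD y) = 0.
  apply: (cvr_orth HP10 _ _ _ hcv) => n.
  case: (hu n) => [[_ ho] e].
  by rewrite /ipP /gD e; apply: ho.
by move: h; rewrite /ipP /gD hp2.
Qed.
Lemma dir2 u0 : BDG u0 ->
  (forall v p, [/\ domGo v, domD (astar (G v)) & mstar v = D (astar (G v))] ->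
     is_orth_proj ip1 ip0 BDD D (astar (G v)) p -> graph_ip ip1 ip0 D (G u0) p = 0) ->
  exists u, [/\ domG u, domD (a (G u)), m u - D (a (G u)) = 0 &
          is_orth_proj ip0 ip1 BDG G u u0].
Proof.
move=> hu0 hR.
have hu0G : domG u0 by case: hu0.
have [hd hDu0] := BDGD hu0.
have hBD := BDD_G hu0.
have [f' [hf' hfq]] := proj_thm HP01 M3 M3sub.1 M3sub.2 M3complete (m u0, a (G u0)).
have ef := M3gl hf'; case: hf' => hf _.
have hl w : domGo w -> ip0 (m u0) w + ip1 (a (G u0)) (G w) = graph_ip ip0 ip1 G f'.1 w.
  move=> hw; have := hfq (gl w) (conj hw erefl).
  rewrite ef /ipP /= (ipBl H0) (ipBl H1) => h.
  exact: sub_eq_help h.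
have hf1G := GoG_dom hf.
have [t [ht htq]] := proj_thm HP01 M4 M4sub.1 M4sub.2 M4complete (gl (- f'.1)).
case: ht => ur [hur et]; rewrite et in htq.
have hTur := HTdom _ hur.
have hTurG := GoG_dom hTur.
have hnf : domGo (- f'.1) by apply: dGoN.
have hnfG := GoG_dom hnf.
have hr : domGo (- f'.1 - T ur) by apply: dGoB.
have hrG := GoG_dom hr.
have hr_orth x : domGo x -> graph_ip ip0 ip1 G (- f'.1 - T ur) (T x) = 0.
  move=> hx; have := htq (gl (T x)) (ex_intro _ x (conj hx erefl)).
  by move=> h; rewrite -glB // in h.
set r := - f'.1 - T ur in hr hrG hr_orth.
have [hKd hKm] : domD (astar (G r)) /\ D (astar (G r)) = mstar r.
  apply: Ddual => v hv.
  have h := hr_orth v hv.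
  have h' : graph_ip ip0 ip1 G (T v) r = 0 by rewrite gipC h conj0.
  rewrite HTdef // Hastar Hmstar in h'.
  have := conj_eq0 h'.
  by rewrite -C1 -C0.
have [p' [hp' hpq]] := proj_thm HP10 M5 M5sub.1 M5sub.2 M5complete (gD (astar (G r))).
have ep : p' = gD p'.1 by case: p' hp' hpq => p1 p2 [_ /= ->].
case: hp' => hpB _.
have hpd : domD p'.1 by case: hpB.
have hproj : is_orth_proj ip1 ip0 BDD D (astar (G r)) p'.1.
  split => // q hq; have := hpq (gD q) (conj hq erefl).
  by rewrite ep -gDB.
have h0 := hR r p'.1 (And3 hr hKd (esym hKm)) hproj.
have hlr : graph_ip ip0 ip1 G f'.1 r = 0.
  rewrite -hl // Hmstar Hastar -hKm.
  have -> : ip0 u0 (D (astar (G r))) = ip0 (D (G u0)) (D (astar (G r))) by rewrite hDu0.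
  rewrite addrC.
  change (graph_ip ip1 ip0 D (G u0) (astar (G r)) = 0).
  have h := proj2 hproj _ hBD.
  rewrite gDipB // in h.
  rewrite -h0 (gDipC p'.1 (G u0)) (gDipC (astar (G r)) (G u0)); congr (_^*).
  by apply/eqP; rewrite -subr_eq0 h.
have hrr : graph_ip ip0 ip1 G r r = 0.
  rewrite /r gipB // gipN // hlr oppr0 sub0r.
  by rewrite gipC hr_orth // conj0 oppr0.
have r0 := gl_def hrG hrr.
have hTf : T ur = - f'.1.
  by move/eqP: r0; rewrite /r subr_eq0 => /eqP <-.
have hurG := GoG_dom hur.
have huG : domG (ur + u0) by apply: dGD.
have hvar : forall w, domGo w -> ip1 (a (G (ur + u0))) (G w) + ip0 (m (ur + u0)) w = 0.
  move=> w hw.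
  rewrite GD // aD mD (ipDl H1) (ipDl H0).
  have e1 := HTdef _ _ hur hw; rewrite hTf gipN // in e1.
  have e2 := hl w hw.
  by rewrite addrACA -e1 (addrC (ip1 _ _)) e2 addNr.
have [hD1 hD2] := Ddual _ _ hvar.
exists (ur + u0); split => //; first by rewrite hD2 subrr.
split => // q hq; rewrite addrK gipC (proj2 hq _ hur) conj0 //.
Qed.

Lemma main_eq u0 :
  (exists u, [/\ domG u, domD (a (G u)), m u - D (a (G u)) = 0 &
          is_orth_proj ip0 ip1 BDG G u u0]) <->
  (BDG u0 /\ forall v p, [/\ domGo v, domD (astar (G v)) & mstar v = D (astar (G v))] ->
     is_orth_proj ip1 ip0 BDD D (astar (G v)) p -> graph_ip ip1 ip0 D (G u0) p = 0).
Proof.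
split.
- by case=> u [h1 h2 h3 h4]; apply: dir1 h4.
- by case=> h1 h2; apply: dir2.
Qed.
End Main.
End Aux.
Import Aux.
Local Open Scope ring_scope.

Theorem proposition5p3 (R : realType)
  (V0 V1 : lmodType R[i]) (ip0 : V0 -> V0 -> R[i]) (ip1 : V1 -> V1 -> R[i])
  (HH0 : is_hilbert ip0) (HH1 : is_hilbert ip1)
  (domG : V0 -> Prop) (G : V0 -> V1) (domD : V1 -> Prop) (D : V1 -> V0)
  (HG : densely_defined_closed ip0 ip1 domG G)
  (HD : densely_defined_closed ip1 ip0 domD D)
  (* hypothesis  -G^star is contained in D *)
  (HGD : forall (y : V1) (z : V0),
      (forall x, domG x -> ip1 (G x) y = ip0 x z) -> domD y /\ D y = - z)
  (m mstar : V0 -> V0) (Hm : bounded_linear ip0 ip0 m) (Hmstar : is_adjoint ip0 ip0 m mstar)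
  (a astar : V1 -> V1) (Ha : bounded_linear ip1 ip1 a) (Hastar : is_adjoint ip1 ip1 a astar)
  (Hcoer : exists mu : R[i], 0 < mu /\
      forall x, mu * hnorm ip1 x ^+ 2 <= 'Re (ip1 (a x) x))
  (* dom(G_ring) = dom(D^star); G_ring = -D^star is contained in G, so acts as G;
     dom(D_ring) = dom(G^star); D_ring = -G^star is contained in D, so acts as D *)
  (T : V0 -> V0)
  (HTdom : forall u, adj_dom ip1 ip0 domD D u -> adj_dom ip1 ip0 domD D (T u))
  (HTdef : forall u v, adj_dom ip1 ip0 domD D u -> adj_dom ip1 ip0 domD D v ->
      graph_ip ip0 ip1 G (T u) v = ip1 (a (G u)) (G v) + ip0 (m u) v)
  (HTran : forall (un : nat -> V0) (y : V0),
      (forall n, adj_dom ip1 ip0 domD D (un n)) -> adj_dom ip1 ip0 domD D y ->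
      cvg_with (graph_norm ip0 ip1 G) (fun n => T (un n)) y ->
      exists u, adj_dom ip1 ip0 domD D u /\ T u = y) :
  let domGo := adj_dom ip1 ip0 domD D in
  let domDo := adj_dom ip0 ip1 domG G in
  let BDG := graph_orth ip0 ip1 domG domGo G in
  let BDD := graph_orth ip1 ip0 domD domDo D in
  let domLambda := fun u0 : V0 => exists u : V0,
      [/\ domG u, domD (a (G u)), m u - D (a (G u)) = 0 &
          is_orth_proj ip0 ip1 BDG G u u0] in
  let kerK := fun v : V0 =>
      [/\ domGo v, domD (astar (G v)) & mstar v = D (astar (G v))] in
  forall u0 : V0,
    domLambda u0 <->
    (BDG u0 /\ forall v p, kerK v -> is_orth_proj ip1 ip0 BDD D (astar (G v)) p ->
        graph_ip ip1 ip0 D (G u0) p = 0).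
Proof.
move=> domGo domDo BDG BDD domLambda kerK u0.
exact: (@main_eq R V0 V1 ip0 ip1 HH0 HH1 domG G domD D HG HD HGD m mstar Hm Hmstar a astar Ha Hastar T HTdom HTdef HTran u0).
Qed.
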